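(* Let $\mathcal{D}\subseteq\{0,1\}^n$ be a nonempty down-monotone set and let $f:\{0,1\}^n\to\mathbb{R}$ be submodular on $\mathcal{D}$. If $f(0)>0$, then there are at least $\frac{1}{n+1}|\mathcal{D}|$ points $y\in\mathcal{D}$ with $f(y)\neq 0$.
   Context: $\mathcal{D}$ is down-monotone if $y\in\mathcal{D}$ and $x\le y$ (coordinatewise) imply $x\in\mathcal{D}$. $f$ is submodular on $\mathcal{D}$ (has non-increasing marginals on $\mathcal{D}$) if $f(x+\mathbf{e}_i)-f(x)\ge f(y+\mathbf{e}_i)-f(y)$ for all $i$ and all $x\le y$ with $x_i=y_i=0$ and $x+\mathbf{e}_i, y+\mathbf{e}_i\in\mathcal{D}$, where $\mathbf{e}_i$ is the $i$-th standard basis vector. *)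

(* Defs.v *)
From mathcomp Require Import all_boot all_order all_algebra.
From mathcomp Require Import reals.
Set Implicit Arguments. Unset Strict Implicit. Unset Printing Implicit Defensive.
Import Order.TTheory GRing.Theory Num.Theory.
Local Open Scope ring_scope.

Notation cube n := {ffun 'I_n -> bool}.

Definition cle (n : nat) (x y : cube n) : bool := [forall i, x i ==> y i].

(* x + e_i (meaningful when x_i = 0): set coordinate i to 1. *)
Definition addei (n : nat) (x : cube n) (i : 'I_n) : cube n :=
  [ffun j => if j == i then true else x j].

Definition zerov (n : nat) : cube n := [ffun => false].

Definition down_monotone (n : nat) (D : {set cube n}) : Prop :=
  forall x y : cube n, y \in D -> cle x y -> x \in D.

Definition submodular_on (R : numDomainType) (n : nat) (D : {set cube n})
  (f : cube n -> R) : Prop :=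
  forall (i : 'I_n) (x y : cube n), cle x y -> x i = false -> y i = false ->
    addei x i \in D -> addei y i \in D ->
    f (addei y i) - f y <= f (addei x i) - f x.

(* Main.v *)
Require Import Defs.
From mathcomp Require Import all_boot all_order all_algebra.
From mathcomp Require Import reals.
Import Order.TTheory GRing.Theory Num.Theory.
Local Open Scope ring_scope.
Set Implicit Arguments. Unset Strict Implicit.

Definition remi (n : nat) (x : {ffun 'I_n -> bool}) (i : 'I_n) : {ffun 'I_n -> bool} :=
  [ffun j => if j == i then false else x j].

Definition trunc (n : nat) (x : {ffun 'I_n -> bool}) (k : nat) : {ffun 'I_n -> bool} :=
  [ffun j : 'I_n => ((nat_of_ord j < k)%N && x j)].

Lemma addei_remi n (y : {ffun 'I_n -> bool}) i : y i -> addei (remi y i) i = y.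
Proof.
move=> yi; apply/ffunP=> j; rewrite !ffunE.
by case: eqP => [->|_]; rewrite ?ffunE ?yi //; case: eqP.
Qed.

Lemma cle_remi n (y : {ffun 'I_n -> bool}) i : cle (remi y i) y.
Proof. by apply/forallP=> j; rewrite ffunE; case: eqP => //= _; apply/implyP. Qed.

Lemma key (R : realType) n (D : {set {ffun 'I_n -> bool}}) (f : {ffun 'I_n -> bool} -> R)
  (y : {ffun 'I_n -> bool}) :
  down_monotone D -> submodular_on D f -> y \in D ->
  (forall i, y i -> f (remi y i) = f y) -> f (zerov n) <= f y.
Proof.
move=> dm sm yD H.
have step : forall x i, cle x y -> x i = false -> y i -> f x <= f (addei x i).
  move=> x i xy xi yi.
  have := sm i x (remi y i).
  rewrite addei_remi // H // subrr subr_ge0; apply.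
  - apply/forallP=> j; rewrite ffunE; case: eqP => [->|_]; first by rewrite xi.
    exact: (forallP xy j).
  - by [].
  - by rewrite ffunE eqxx.
  - apply: (dm _ y yD); apply/forallP=> j; rewrite ffunE.
    case: eqP => [->|_]; [by rewrite yi | exact: (forallP xy j)].
  - by [].
have tr : forall k, cle (trunc y k) y.
  by move=> k; apply/forallP=> j; rewrite ffunE; apply/implyP=> /andP[].
have : forall k, f (zerov n) <= f (trunc y k).
  elim=> [|k IH].
    suff -> : trunc y 0 = zerov n by [].
    by apply/ffunP=> j; rewrite !ffunE.
  case: (ltnP k n) => kn; last first.
    suff -> : trunc y k.+1 = trunc y k by [].
    apply/ffunP=> j; rewrite !ffunE.
    by rewrite (leq_trans (ltn_ord j) kn) (leq_trans (ltn_ord j) (leqW kn)).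
  pose i := Ordinal kn.
  case yi: (y i); last first.
    suff -> : trunc y k.+1 = trunc y k by [].
    apply/ffunP=> j; rewrite !ffunE ltnS leq_eqVlt.
    case: (eqVneq (val j) k) => [ej|nj] //=.
    have ji : j = i by apply/val_inj.
    by rewrite ji yi !andbF.
  have -> : trunc y k.+1 = addei (trunc y k) i.
    apply/ffunP=> j; rewrite !ffunE ltnS leq_eqVlt.
    case: (eqVneq j i) => [->|nj] /=; first by rewrite eqxx yi.
    have -> : (val j == k) = false by apply/negbTE; apply: contra nj => /eqP e; apply/eqP/val_inj.
    by [].
  apply: (le_trans IH); apply: step => //; first by rewrite ffunE ltnn.
move=> /(_ n); suff -> : trunc y n = y by [].
by apply/ffunP=> j; rewrite ffunE ltn_ord.
Qed.

Theorem lemma8 (R : realType) (n : nat) (D : {set {ffun 'I_n -> bool}})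
  (f : {ffun 'I_n -> bool} -> R) :
  D != set0 -> down_monotone D -> submodular_on D f -> 0 < f (zerov n) ->
  (#|D|%:R / (n.+1)%:R : R) <= #|[set y in D | f y != 0]|%:R.
Proof.
move=> _ dm sm f0.
set N := [set y in D | f y != 0].
have sub : D :\: N \subset [set addei p.2 p.1 | p in setX [set: 'I_n] N].
  apply/subsetP=> y; rewrite !inE negb_and => /andP[/orP[]]; first by move=> nD yD; rewrite yD in nD.
  rewrite negbK => /eqP fy yD.
  have : ~ (forall i, y i -> f (remi y i) = f y).
    move=> H; have := key dm sm yD H; rewrite fy => h.
    by move: (lt_le_trans f0 h); rewrite ltxx.
  move=> /(_ _) H.
  have [i /andP[yi ri]] : exists i, y i && (f (remi y i) != 0).
    case: (boolP [exists i, y i && (f (remi y i) != 0)]) => [/existsP //|hn]; exfalso; apply: H => i yi.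
    move/existsPn: hn => /(_ i); rewrite yi /= negbK fy => /eqP //.
  apply/imsetP; exists (i, remi y i); last by rewrite addei_remi.
  rewrite !inE /= ri andbT; exact: (dm _ y yD (cle_remi y i)).
have cnat : (#|D| <= n.+1 * #|N|)%N.
  rewrite -(cardsID N D) mulSn.
  have -> : D :&: N = N by apply/setIidPr/subsetP=> y; rewrite inE => /andP[].
  rewrite leq_add2l (leq_trans (subset_leq_card sub)) //.
  by rewrite (leq_trans (leq_imset_card _ _)) // cardsX cardsT card_ord.
rewrite ler_pdivrMr ?ltr0Sn // mulrC -natrM ler_nat.
exact: cnat.
Qed.
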